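(* Let $N$ be a positive integer and let $E$ and $F$ each be a union of $N$ pairwise disjoint closed (nondegenerate) subarcs of $\mathbb{T}$. If $\hat\chi_E(n)=\hat\chi_F(n)$ for $n=0,1,\dots,N$, then $E=F$.
   Context: $\mathbb{T}$ is the unit circle with normalized Lebesgue measure; $\chi_E$ is the indicator function of $E$, and $\hat f(n)=\frac{1}{2\pi}\int_0^{2\pi} f(e^{i\theta})e^{-in\theta}\,d\theta$. *)

(* Defs.v *)
From HB Require Import structures.
From mathcomp Require Import all_boot all_order all_algebra.
From mathcomp Require Import all_classical all_reals all_analysis.
Set Implicit Arguments. Unset Strict Implicit. Unset Printing Implicit Defensive.
Import Order.TTheory GRing.Theory Num.Theory.
Import numFieldNormedType.Exports.
Local Open Scope classical_set_scope.
Local Open Scope ring_scope.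

(* Subsets of the unit circle T are represented by 2*pi-periodic sets of
   angles theta : R (the point e^{i theta} belongs to the subset iff theta
   belongs to the periodic set). *)

Definition arc {R : realType} (a b : R) : set R :=
  [set t | exists k : int, a <= t + k%:~R * (2 * pi) <= b].

Definition good_arc {R : realType} (a b : R) : Prop := a < b /\ b < a + 2 * pi.

Definition union_of_disjoint_arcs {R : realType} (N : nat) (E : set R) : Prop :=
  exists a b : 'I_N -> R,
    (forall i, good_arc (a i) (b i)) /\
    (forall i j, i != j -> arc (a i) (b i) `&` arc (a j) (b j) = set0) /\
    E = \bigcup_(i in [set: 'I_N]) arc (a i) (b i).

(* Real and imaginary parts of the Fourier coefficient
   hat(chi_E)(n) = (1/2pi) int_0^{2pi} chi_E(e^{it}) e^{-int} dt
   (Re = (1/2pi) int chi_E cos(nt), Im = -(1/2pi) int chi_E sin(nt)). *)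
Definition fourier_re {R : realType} (E : set R) (n : nat) : R :=
  (2 * pi)^-1 * Rintegral lebesgue_measure `[0, 2 * pi]%classic
                  (fun t => \1_E t * cos (n%:R * t)).

Definition fourier_im {R : realType} (E : set R) (n : nat) : R :=
  - ((2 * pi)^-1 * Rintegral lebesgue_measure `[0, 2 * pi]%classic
                  (fun t => \1_E t * sin (n%:R * t))).

(* Main.v *)
Require Import Defs.
From HB Require Import structures.
From mathcomp Require Import all_boot all_order all_algebra.
From mathcomp Require Import all_classical all_reals all_analysis.
From mathcomp Require Import ring lra zify.
From mathcomp Require Import measurable_realfun.
Import Order.TTheory GRing.Theory Num.Theory.
Import numFieldNormedType.Exports.
Local Open Scope classical_set_scope.
Local Open Scope ring_scope.

Section S.
Context {R : realType}.
Implicit Types a b t x : R.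

Lemma per_gen (f : R -> R) : periodic f (pi *+ 2) ->
  forall x (k : int), f (x + k%:~R * (2 * pi)) = f x.
Proof.
move=> Pf; have P := periodicn Pf.
have e : forall n : nat, n%:R * (2 * pi) = pi *+ 2 *+ n :> R.
  by move=> n; rewrite mulr_natl -[2]/(2%:R) mulr_natl.
move=> x [] n.
  by rewrite -pmulrn e P.
rewrite NegzE mulrNz mulNr -pmulrn e.
by rewrite -(P n.+1 (x - _)) subrK.
Qed.

Lemma cos_per x (k : int) : cos (x + k%:~R * (2 * pi)) = cos x.
Proof. apply: (per_gen cos). exact: cosD2pi. Qed.
Lemma sin_per x (k : int) : sin (x + k%:~R * (2 * pi)) = sin x.
Proof. apply: (per_gen sin). exact: sinD2pi. Qed.


Lemma cos_le_mono x y : 0 <= x -> y <= pi -> x <= y -> cos y <= cos x.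
Proof.
move=> x0 ypi xy.
have xpi : x <= pi by exact: le_trans xy ypi.
have y0 : 0 <= y by exact: le_trans x0 xy.
by rewrite leNgt ltr_cos ?in_itv /= ?x0 ?xpi ?y0 ?ypi // -leNgt.
Qed.

Lemma cos_lt_mono x y : 0 <= x -> y <= pi -> x < y -> cos y < cos x.
Proof.
move=> x0 ypi xy.
have xpi : x <= pi by exact: le_trans (ltW xy) ypi.
have y0 : 0 <= y by exact: le_trans x0 (ltW xy).
by rewrite ltr_cos ?in_itv /= ?x0 ?xpi ?y0 ?ypi.
Qed.

Lemma arc_cos a b t : good_arc a b ->
  Defs.arc a b t <-> cos ((b - a) / 2) <= cos (t - (a + b) / 2).
Proof.
move=> [ab ba]; have pi0 := @pi_gt0 R.
split.
  move=> [k /andP[h1 h2]].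
  rewrite -(cos_per (t - (a + b) / 2) k) -(cos_norm (t - _ + _)).
  apply: cos_le_mono; [exact: normr_ge0| lra|].
  rewrite ler_norml; apply/andP; split; lra.
move=> hc.
set s := t - (a + b) / 2.
set fl := Num.floor ((s + pi) / (2 * pi)).
have pi2 : 0 < 2 * (pi : R) by lra.
have f1 : fl%:~R * (2 * pi) <= s + pi.
  by rewrite -ler_pdivlMr // floor_le.
have f2 : s + pi < (fl + 1)%:~R * (2 * pi).
  by rewrite -ltr_pdivrMr // floorD1_gt.
move: f2; rewrite intrD mulrDl mul1r => f2.
exists (- fl).
set u := s + (- fl)%:~R * (2 * pi).
have ue : u = s - fl%:~R * (2 * pi) by rewrite /u mulrNz mulNr.
have cu : cos u = cos s by rewrite /u cos_per.
have uh : `|u| <= (b - a) / 2.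
  rewrite leNgt; apply/negP => hu.
  have : cos `|u| < cos ((b - a) / 2).
    apply: cos_lt_mono => //; first by lra.
    rewrite ler_norml; apply/andP; split; lra.
  rewrite cos_norm cu; move: hc; rewrite -/s; lra.
have ue' : t + (- fl)%:~R * (2 * pi) = u + (a + b) / 2.
  by rewrite /u /s; ring.
move: uh; rewrite ler_norml ue' => /andP[u1 u2].
apply/andP; split; lra.
Qed.

Lemma arc_int a b t : good_arc a b -> a < t < b ->
  cos ((b - a) / 2) < cos (t - (a + b) / 2).
Proof.
move=> [ab ba] /andP[h1 h2]; have pi0 := @pi_gt0 R.
rewrite -(cos_norm (t - _)); apply: cos_lt_mono; [exact: normr_ge0| lra|].
rewrite ltr_norml; apply/andP; split; lra.
Qed.


Inductive trig (n : nat) : (R -> R) -> Prop :=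
| TC k of (k <= n)%N : trig n (fun t => cos (k%:R * t))
| TS k of (k <= n)%N : trig n (fun t => sin (k%:R * t))
| TA f g of trig n f & trig n g : trig n (fun t => f t + g t)
| TZ c f of trig n f : trig n (fun t => c * f t)
| TE f g of trig n f & (forall t, f t = g t) : trig n g.

Arguments TC {n} k.
Arguments TS {n} k.
Arguments TA {n f g}.
Arguments TZ {n} c {f}.
Arguments TE {n f g}.

Lemma trig_mono n m f : (n <= m)%N -> trig n f -> trig m f.
Proof.
move=> nm; elim=> {f}.
- by move=> k kn; apply: TC; exact: leq_trans nm.
- by move=> k kn; apply: TS; exact: leq_trans nm.
- by move=> f g _ ? _ ?; exact: TA.
- by move=> c f _ ?; exact: TZ.
- by move=> f g _ ? e; exact: TE e.
Qed.

Arguments trig_mono {n m f}.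

Lemma natS_mul (k : nat) t : k.+1%:R * t = k%:R * t + t.
Proof. by rewrite -natr1 mulrDl mul1r. Qed.

Lemma trig_basis n k (f : R -> R) (A B C D : R) :
  (k.+1 <= n)%N -> (forall t, f t = A * cos (k.+2%:R * t) + B * sin (k.+2%:R * t)
     + C * cos (k%:R * t) + D * sin (k%:R * t)) -> trig n.+1 f.
Proof.
move=> kn e.
apply: (@TE n.+1 (fun t => A * cos (k.+2%:R * t) + B * sin (k.+2%:R * t)
     + C * cos (k%:R * t) + D * sin (k%:R * t))); last by move=> t; rewrite e.
apply: TA; [apply: TA; [apply: TA|]|]; apply: TZ.
- exact: TC.
- exact: TS.
- by apply: TC; lia.
- by apply: TS; lia.
Qed.

Lemma trig_ext n f g : trig n f -> (forall t, f t = g t) -> trig n g.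
Proof. by move=> tf e; exact: TE e. Qed.
Arguments trig_ext {n f g}.

Lemma trig_mul1 n f : trig n f -> trig n.+1 (fun t => f t * cos t) /\
  trig n.+1 (fun t => f t * sin t).
Proof.
elim=> {f}.
- move=> [|j] kn.
    split.
      by apply: (trig_ext (@TC n.+1 1 _)) => // t; rewrite mul0r cos0 !mul1r.
    by apply: (trig_ext (@TS n.+1 1 _)) => // t; rewrite mul0r cos0 !mul1r.
  split.
    apply: (@trig_basis n j _ (1/2) 0 (1/2) 0) => // t.
    rewrite (natS_mul j.+1) (_ : j%:R * t = j.+1%:R * t - t) ?cosB ?sinB ?cosD ?sinD; [by field| by rewrite natS_mul addrK].
  apply: (@trig_basis n j _ 0 (1/2) 0 (-1/2)) => // t.
  rewrite (natS_mul j.+1) (_ : j%:R * t = j.+1%:R * t - t) ?cosB ?sinB ?cosD ?sinD; [by field| by rewrite natS_mul addrK].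
- move=> [|j] kn.
    split.
      by apply: (trig_ext (TZ 0 (@TS n.+1 0 _))) => // t; rewrite !mul0r sin0 mul0r.
    by apply: (trig_ext (TZ 0 (@TS n.+1 0 _))) => // t; rewrite !mul0r sin0 mul0r.
  split.
    apply: (@trig_basis n j _ 0 (1/2) 0 (1/2)) => // t.
    rewrite (natS_mul j.+1) (_ : j%:R * t = j.+1%:R * t - t) ?cosB ?sinB ?cosD ?sinD; [by field| by rewrite natS_mul addrK].
  apply: (@trig_basis n j _ (-1/2) 0 (1/2) 0) => // t.
  rewrite (natS_mul j.+1) (_ : j%:R * t = j.+1%:R * t - t) ?cosB ?sinB ?cosD ?sinD; [by field| by rewrite natS_mul addrK].
- move=> f g _ [f1 f2] _ [g1 g2]; split.
    by apply: (trig_ext (TA f1 g1)) => t; rewrite mulrDl.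
  by apply: (trig_ext (TA f2 g2)) => t; rewrite mulrDl.
- move=> c f _ [f1 f2]; split.
    by apply: (trig_ext (TZ c f1)) => t; rewrite mulrA.
  by apply: (trig_ext (TZ c f2)) => t; rewrite mulrA.
- move=> f g _ [f1 f2] e; split.
    by apply: (trig_ext f1) => t; rewrite e.
  by apply: (trig_ext f2) => t; rewrite e.
Qed.

Arguments trig_mul1 {n f}.

Lemma trig_prod (c m : nat -> R) n :
  trig n (fun t => \prod_(i < n) (c i - cos (t - m i))).
Proof.
elim: n => [|n IH].
  by apply: (trig_ext (@TC 0 0 _)) => // t; rewrite big_ord0 mul0r cos0.
have [h1 h2] := trig_mul1 IH.
apply: (trig_ext (TA (TZ (c n) (trig_mono (leqnSn n) IH))
   (TA (TZ (- cos (m n)) h1) (TZ (- sin (m n)) h2)))) => t.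
rewrite big_ord_recr /= cosB; ring.
Qed.


Lemma trig_bounded n f : trig n f -> exists M, forall t, `|f t| <= M.
Proof.
elim=> {f}.
- by move=> k _; exists 1 => t; exact: cos_max.
- by move=> k _; exists 1 => t; exact: sin_max.
- move=> f g _ [M1 h1] _ [M2 h2]; exists (M1 + M2) => t.
  by apply: le_trans (ler_normD _ _) _; exact: lerD.
- move=> c f _ [M h]; exists (`|c| * M) => t.
  by rewrite normrM ler_wpM2l.
- by move=> f g _ [M h] e; exists M => t; rewrite -e.
Qed.

Lemma trig_meas n f : trig n f -> measurable_fun setT f.
Proof.
elim=> {f}.
- move=> k _; apply: measurableT_comp; first by apply: continuous_measurable_fun; exact: continuous_cos.
  exact: mulrl_measurable.
- move=> k _; apply: measurableT_comp; first by apply: continuous_measurable_fun; exact: continuous_sin.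
  exact: mulrl_measurable.
- by move=> f g _ mf _ mg; exact: measurable_funD.
- by move=> c f _ mf; exact: (measurable_funM (measurable_cst _) mf).
- by move=> f g _ mf e; rewrite -(funext e).
Qed.

Arguments trig_bounded {n f}.
Arguments trig_meas {n f}.

Definition D2 : set R := `[0, 2 * pi]%classic.

Lemma intg (g : R -> R) M : measurable_fun setT g -> (forall t, `|g t| <= M) ->
  (@lebesgue_measure R).-integrable D2 (EFin \o g).
Proof.
move=> mg hM; apply: measurable_bounded_integrable.
- exact: measurable_itv.
- by apply: compact_finite_measure; exact: segment_compact.
- exact: measurable_funS mg.
- exists M; split; first by rewrite num_real.
  by move=> x Mx y _; apply: le_trans (hM y) (ltW Mx).
Qed.

Lemma intg_trig (E : set R) n f : measurable E -> trig n f ->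
  (@lebesgue_measure R).-integrable D2 (EFin \o (fun t => \1_E t * f t)).
Proof.
move=> mE tf; have [M hM] := trig_bounded tf.
apply: (@intg _ M).
  by apply: measurable_funM; [exact: measurable_indic | exact: trig_meas tf].
move=> t; rewrite normrM indicE; case: (t \in E).
  by rewrite normr1 mul1r.
by rewrite normr0 mul0r; apply: le_trans (hM t).
Qed.


Notation I g := (Rintegral (@lebesgue_measure R) D2 g).

Lemma four_lin (E F : set R) N f : measurable E -> measurable F ->
  (forall n : nat, (n <= N)%N ->
     fourier_re E n = fourier_re F n /\ fourier_im E n = fourier_im F n) ->
  trig N f ->
  I (fun t => \1_E t * f t) = I (fun t => \1_F t * f t).
Proof.
move=> mE mF H; have pi0 := @pi_gt0 R.
have i0 : (2 * pi : R)^-1 != 0 by rewrite invr_eq0; apply/eqP; lra.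
elim=> {f}.
- move=> k kN; have [h _] := H k kN; move: h; rewrite /fourier_re.
  by move=> h; apply: (mulfI i0); exact: h.
- move=> k kN; have [_ h] := H k kN; move: h; rewrite /fourier_im.
  by move/oppr_inj => h; apply: (mulfI i0); exact: h.
- move=> f g tf IHf tg IHg.
  under eq_Rintegral do rewrite mulrDr.
  rewrite RintegralD; [|exact: measurable_itv|exact: intg_trig tf|exact: intg_trig tg].
  under [RHS]eq_Rintegral do rewrite mulrDr.
  rewrite RintegralD; [|exact: measurable_itv|exact: intg_trig tf|exact: intg_trig tg].
  by rewrite IHf IHg.
- move=> c f tf IHf.
  under eq_Rintegral do rewrite mulrCA.
  rewrite RintegralZl; [|exact: measurable_itv|exact: intg_trig tf].
  under [RHS]eq_Rintegral do rewrite mulrCA.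
  rewrite RintegralZl; [|exact: measurable_itv|exact: intg_trig tf].
  by rewrite IHf.
- by move=> f g _ IH e; rewrite -(funext e).
Qed.


Lemma trig_cont n f : trig n f -> continuous f.
Proof.
elim=> {f}.
- move=> k _ x; apply: (continuous_comp (f := fun t => k%:R * t)).
    exact: mulrl_continuous.
  exact: continuous_cos.
- move=> k _ x; apply: (continuous_comp (f := fun t => k%:R * t)).
    exact: mulrl_continuous.
  exact: continuous_sin.
- by move=> f g _ cf _ cg x; exact: (continuousD (cf x) (cg x)).
- by move=> c f _ cf x; exact: (continuousM (cvg_cst c) (cf x)).
- by move=> f g _ cf e; rewrite -(funext e).
Qed.
Arguments trig_cont {n f}.

Lemma trig_r (h m : R) : trig 1 (fun s => cos h - cos (s - m)).
Proof.
apply: (trig_ext (TA (TZ (cos h) (@TC 1 0 isT))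
   (TA (TZ (- cos m) (@TC 1 1 isT)) (TZ (- sin m) (@TS 1 1 isT))))) => s.
by rewrite mul0r cos0 !mul1r cosB; ring.
Qed.

Lemma near_ballR (t : R) (Q : R -> Prop) : (\forall s \near t, Q s) ->
  exists2 e, 0 < e & forall s, `|t - s| < e -> Q s.
Proof. by move/nbhs_normP => [e e0 he]; exists e => // s; apply: he. Qed.

End S.

Arguments trig_cont {R n f}. Arguments trig_meas {R n f}.
Arguments trig_bounded {R n f}. Arguments trig_ext {R n f g}.
Arguments trig_mono {R n m f}. Arguments trig_mul1 {R n f}.
Arguments TC {R n} k. Arguments TS {R n} k. Arguments TA {R n f g}.
Arguments TZ {R n} c {f}. Arguments TE {R n f g}.
Arguments near_ballR {R t Q}.
Arguments intg_trig {R E n f}. Arguments four_lin {R E F N f}.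

Section G.
Context {R : realType}.
Implicit Types (a b s : R).

Definition rr (a b s : R) := cos ((b - a) / 2) - cos (s - (a + b) / 2).

Lemma arc_rr a b s : good_arc a b -> (Defs.arc a b s <-> rr a b s <= 0).
Proof. by move=> g; rewrite arc_cos // /rr subr_le0. Qed.

Lemma rr_int a b s : good_arc a b -> a < s < b -> rr a b s < 0.
Proof. by move=> g h; rewrite /rr subr_lt0; exact: arc_int. Qed.

Lemma rr_per a b s (k : int) : rr a b (s + k%:~R * (2 * pi)) = rr a b s.
Proof. by rewrite /rr addrAC cos_per. Qed.

Lemma rr_cont a b : continuous (rr a b).
Proof. exact: (trig_cont (@trig_r R ((b - a) / 2) ((a + b) / 2))). Qed.

Lemma arc_meas a b : good_arc a b -> measurable (Defs.arc a b).
Proof.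
move=> g.
have mr : measurable_fun setT (rr a b) := trig_meas (@trig_r R ((b - a) / 2) ((a + b) / 2)).
rewrite (_ : Defs.arc a b = setT `&` (rr a b) @^-1` `]-oo, 0]).
  exact: mr measurableT _ (measurable_itv _).
apply/seteqP; split => s /=; rewrite in_itv /= arc_rr //.
by case.
Qed.

Definition U N (a b : 'I_N -> R) : set R :=
  \bigcup_(i in [set: 'I_N]) Defs.arc (a i) (b i).

Definition goodsys N (a b : 'I_N -> R) :=
  (forall i, good_arc (a i) (b i)) /\
  (forall i j, i != j -> Defs.arc (a i) (b i) `&` Defs.arc (a j) (b j) = set0).

Definition PP N (a b : 'I_N -> R) s := \prod_(i < N) rr (a i) (b i) s.
Arguments PP {N}.

Lemma trig_prodI n (c m : 'I_n -> R) :
  trig n (fun t => \prod_(i < n) (c i - cos (t - m i))).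
Proof.
elim: n c m => [|n IH] c m.
  by apply: (trig_ext (@TC _ 0 0 isT)) => t; rewrite big_ord0 mul0r cos0.
have [h1 h2] := trig_mul1 (IH (fun i => c (widen_ord (leqnSn n) i))
                            (fun i => m (widen_ord (leqnSn n) i))).
apply: (trig_ext (TA (TZ (c ord_max) (trig_mono (leqnSn n)
   (IH (fun i => c (widen_ord (leqnSn n) i)) (fun i => m (widen_ord (leqnSn n) i)))))
   (TA (TZ (- cos (m ord_max)) h1) (TZ (- sin (m ord_max)) h2)))) => t.
rewrite big_ord_recr /= cosB; ring.
Qed.

Lemma PP_trig N (a b : 'I_N -> R) : trig N (PP a b).
Proof.
apply: (trig_ext (trig_prodI N (fun i => cos ((b i - a i) / 2)) (fun i => (a i + b i) / 2))).
by move=> s; rewrite /PP; apply: eq_bigr.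
Qed.

Lemma indic01 (A : set R) s : 0 <= (\1_A s : R) <= 1.
Proof. by rewrite indicE; case: (s \in A) => /=; rewrite ?ler01 ?lexx. Qed.

Arguments U {N}.

Variables (N : nat) (a b : 'I_N -> R).
Hypothesis G : goodsys N a b.

Lemma U_in s : U a b s <-> exists i, Defs.arc (a i) (b i) s.
Proof.
split; first by move=> [i _ h]; exists i.
by move=> [i h]; exists i.
Qed.

Lemma U_meas : measurable (U a b).
Proof.
apply: fin_bigcup_measurable; first exact: finite_finset.
by move=> i _; apply: arc_meas; case: G.
Qed.

Lemma U_per s (k : int) : U a b (s + k%:~R * (2 * pi)) <-> U a b s.
Proof.
have [g _] := G.
rewrite !U_in; split => -[i h]; exists i; move: h; rewrite !arc_rr // rr_per //.
Qed.

Lemma rr_pos i s : ~ Defs.arc (a i) (b i) s -> 0 < rr (a i) (b i) s.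
Proof.
have [g _] := G; rewrite arc_rr // => h; rewrite ltNge; apply/negP => h'; exact: h.
Qed.

Lemma PP_in i s : Defs.arc (a i) (b i) s -> PP a b s <= 0 /\
   (forall j, j != i -> 0 < rr (a j) (b j) s).
Proof.
have [g d] := G => h.
have oth : forall j, j != i -> 0 < rr (a j) (b j) s.
  move=> j ji; apply: rr_pos => hj.
  have : (Defs.arc (a j) (b j) `&` Defs.arc (a i) (b i)) s by split.
  by rewrite d.
split => //.
rewrite /PP (bigD1 i) //=; apply: mulr_le0_ge0; first by rewrite -arc_rr.
by apply: prodr_ge0 => j ji; apply/ltW; exact: oth.
Qed.

Lemma PP_out s : ~ U a b s -> 0 < PP a b s.
Proof.
move=> h; rewrite /PP; apply: prodr_gt0 => i _; apply: rr_pos => hi.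
by apply: h; rewrite U_in; exists i.
Qed.

Lemma PP_per s (k : int) : PP a b (s + k%:~R * (2 * pi)) = PP a b s.
Proof. by apply: eq_bigr => i _; rewrite rr_per. Qed.


Lemma sign_le0 (F : set R) s : (\1_(U a b) s - \1_F s) * PP a b s <= 0.
Proof.
have := indic01 F s => /andP[f0 f1].
case: (pselect (U a b s)) => hs.
  have [i hi] := (U_in s).1 hs.
  have [hp _] := PP_in _ _ hi.
  apply: mulr_ge0_le0 => //.
  by rewrite indicE mem_set //= subr_ge0.
have hp := PP_out _ hs.
apply: mulr_le0_ge0; last exact: ltW.
by rewrite indicE memNset //= sub0r oppr_le0.
Qed.

Lemma notin_nbhd t : ~ U a b t ->
  exists2 e, 0 < e & forall s, `|t - s| < e -> ~ U a b s.
Proof.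
move=> nt; have [g _] := G.
have h : forall i : 'I_N, \forall s \near t, 0 < rr (a i) (b i) s.
  move=> i; have H := cvgr_gt _ (rr_cont (a i) (b i) t).
  have pos : 0 < rr (a i) (b i) t by apply: rr_pos => hi; apply: nt; apply/U_in; exists i.
  exact: (H _ 0 pos).
have [e e0 he] := near_ballR (filter_forall _ h).
exists e => // s /he hs /U_in [i hi].
by have := (arc_rr _ _ _ (g i)).1 hi; rewrite leNgt hs.
Qed.

Lemma PP_int i s (k : int) : a i < s + k%:~R * (2 * pi) < b i -> PP a b s < 0.
Proof.
move=> h; have [g _] := G.
have r0 : rr (a i) (b i) s < 0 by rewrite -(rr_per _ _ _ k); exact: rr_int.
have hi : Defs.arc (a i) (b i) s by rewrite arc_rr // ltW.
have [_ oth] := PP_in _ _ hi.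
rewrite /PP (bigD1 i) //= pmulr_llt0 //.
by apply: prodr_gt0 => j ji; exact: oth.
Qed.

Notation Ig g := (Rintegral (@lebesgue_measure R) D2 g).

Definition gg (F : set R) u := (\1_(U a b) u - \1_F u) * PP a b u.

Lemma gg_int (F : set R) : measurable F ->
  (@lebesgue_measure R).-integrable D2 (EFin \o gg F).
Proof.
move=> mF; have [M hM] := trig_bounded (PP_trig N a b).
apply: (intg _ M).
  apply: measurable_funM; last exact: trig_meas (PP_trig N a b).
  by apply: measurable_funB; apply: measurable_indic => //; exact: U_meas.
move=> u; rewrite /gg normrM -[M]mul1r; apply: ler_pM => //.
have := indic01 (U a b) u; have := indic01 F u.
move=> /andP[h1 h2] /andP[h3 h4]; rewrite ler_norml; apply/andP; split; lra.
Qed.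

Lemma gg_zero (F : set R) (N' : nat) : measurable F -> N' = N ->
  (forall n : nat, (n <= N')%N ->
     fourier_re (U a b) n = fourier_re F n /\ fourier_im (U a b) n = fourier_im F n) ->
  Ig (gg F) = 0.
Proof.
move=> mF eN H; rewrite /gg.
under eq_Rintegral do rewrite mulrBl.
rewrite RintegralB; [|exact: measurable_itv|exact: intg_trig U_meas (PP_trig N a b)
   |exact: intg_trig mF (PP_trig N a b)].
apply/eqP; rewrite subr_eq0; apply/eqP.
apply: (four_lin U_meas mF H); rewrite eN; exact: PP_trig.
Qed.

Lemma memE (A : set R) x y : (A x <-> A y) -> (x \in A) = (y \in A).
Proof.
move=> h; apply/idP/idP => /set_mem hx; apply/mem_set; by apply h.
Qed.

Lemma gg_neg (F : set R) t :
  measurable F ->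
  (forall u, ~ F u -> exists2 e, 0 < e & forall s, `|u - s| < e -> ~ F s) ->
  (forall u (k : int), F (u + k%:~R * (2 * pi)) <-> F u) ->
  U a b t -> ~ F t -> Ig (gg F) < 0.
Proof.
move=> mF nF perF Ut nFt.
have [g _] := G.
have pi0 := @pi_gt0 R.
have pi2 : 0 < 2 * (pi : R) by lra.
have [i [k /andP[hk1 hk2]]] : exists i (k : int),
    a i <= t + k%:~R * (2 * pi) <= b i.
  by have [i [k hk]] := (U_in t).1 Ut; exists i, k.
have [e e0 he] := nF t nFt.
have [g1 g2] := g i.
have [s' /andP[hs1 hs2] hs3] : exists2 s', a i < s' < b i &
    `|t + k%:~R * (2 * pi) - s'| < e.
  have [tb|tb] := ltP (t + k%:~R * (2 * pi)) (b i).
    have [w [w0 [w1 w2]]] : exists w, 0 < w /\ w <= b i - (t + k%:~R * (2 * pi)) /\ w <= e.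
      have [c|c] := lerP (b i - (t + k%:~R * (2 * pi))) e.
        by exists (b i - (t + k%:~R * (2 * pi))); split; [lra|split; lra].
      by exists e; split; [lra|split; lra].
    exists (t + k%:~R * (2 * pi) + w / 2).
      by apply/andP; split; lra.
    by rewrite ltr_norml; apply/andP; split; lra.
  have [w [w0 [w1 w2]]] : exists w, 0 < w /\ w <= b i - a i /\ w <= e.
    have [c|c] := lerP (b i - a i) e.
      by exists (b i - a i); split; [lra|split; lra].
    by exists e; split; [lra|split; lra].
  exists (b i - w / 2).
    by apply/andP; split; lra.
  by rewrite ltr_norml; apply/andP; split; lra.
pose s := s' - k%:~R * (2 * pi).
have es : s + k%:~R * (2 * pi) = s' by rewrite /s subrK.
have nFs : ~ F s.
  apply: he; rewrite (_ : t - s = t + k%:~R * (2 * pi) - s') //.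
  by rewrite /s; ring.
have PPs : PP a b s < 0 by apply: (PP_int i s k); rewrite es hs1 hs2.
have ris : rr (a i) (b i) s < 0.
  by rewrite -(rr_per _ _ _ k) es; apply: rr_int (g i) _; rewrite hs1 hs2.
have [e2 e20 he2] := nF s nFs.
have n3 : \forall u \near s, ~ F u.
  by apply/nbhs_normP; exists e2 => // u /= hu; exact: he2.
have n1 : \forall u \near s, PP a b u < PP a b s / 2.
  have H := cvgr_lt _ (trig_cont (PP_trig N a b) s).
  have hz : PP a b s / 2 > PP a b s by lra.
  exact: (H _ _ hz).
have n2 : \forall u \near s, rr (a i) (b i) u < 0.
  have H := cvgr_lt _ (rr_cont (a i) (b i) s).
  exact: (H _ _ ris).
have [d d0 hd] := near_ballR (filterI (filterI n1 n2) n3).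
pose fl := Num.floor (s / (2 * pi)).
have f1 : fl%:~R * (2 * pi) <= s by rewrite -ler_pdivlMr // floor_le.
have f2 : s < fl%:~R * (2 * pi) + 2 * pi.
  by move: (floorD1_gt (s / (2 * pi))); rewrite ltr_pdivrMr // intrD mulrDl mul1r.
pose s0 := s - fl%:~R * (2 * pi).
have s00 : 0 <= s0 by rewrite /s0; lra.
have s01 : s0 < 2 * pi by rewrite /s0; lra.
have [w [w0 [w1 w2]]] : exists w, 0 < w /\ w < d /\ s0 + w <= 2 * pi.
  have [c|c] := lerP (d / 2) (2 * pi - s0).
    by exists (d / 2); split; [lra|split; lra].
  by exists (2 * pi - s0); split; [lra|split; lra].
pose c := PP a b s / 2.
have c0 : c < 0 by rewrite /c; lra.
pose J : set R := `[s0, s0 + w]%classic.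
have mJ : measurable J by exact: measurable_itv.
have bound : forall u, D2 u -> gg F u <= c * \1_J u.
  move=> u Du; rewrite indicE.
  case: (boolP (u \in J)) => hu; last by rewrite mulr0; exact: sign_le0.
  move: hu; rewrite in_setE /J /= in_itv /= => /andP[u1 u2].
  have hdu : `|s - (u + fl%:~R * (2 * pi))| < d.
    by rewrite ltr_norml; apply/andP; split; rewrite /s0 in u1 u2; lra.
  have [[hP hr] hF] := hd _ hdu.
  have ge : gg F u = gg F (u + fl%:~R * (2 * pi)).
    rewrite /gg PP_per !indicE.
    by rewrite (memE _ _ _ (U_per u fl)) (memE _ _ _ (perF u fl)).
  rewrite ge /gg !indicE mem_set; last first.
    by apply/U_in; exists i; rewrite arc_rr // ltW.
  rewrite memNset //= subr0 mul1r mulr1 ltW //.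
have int2 : (@lebesgue_measure R).-integrable D2 (EFin \o (fun u => c * \1_J u)).
  apply: (intg _ `|c|).
    by apply: measurable_funM; [exact: measurable_cst | exact: measurable_indic].
  move=> u; rewrite normrM -[X in _ <= X]mulr1 ler_wpM2l //.
  by have := indic01 J u => /andP[h1 h2]; rewrite ger0_norm.
have : Ig (gg F) <= Ig (fun u => c * \1_J u).
  apply: le_Rintegral; [exact: measurable_itv| exact: gg_int _ mF| exact: int2| exact: bound].
have intJ : (@lebesgue_measure R).-integrable D2 (EFin \o (fun u => \1_J u)).
  apply: (intg _ 1); first exact: measurable_indic.
  by move=> u; have := indic01 J u => /andP[h1 h2]; rewrite ger0_norm.
rewrite RintegralZl; [|exact: measurable_itv|exact: intJ].
have -> : Ig (fun x => \1_J x) = w.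
  rewrite /Rintegral integral_indic //; last exact: measurable_itv.
  rewrite setIidl; last first.
    move=> u; rewrite /J /D2 /= !in_itv /= => /andP[u1 u2].
    by apply/andP; split; lra.
  have h := lebesgue_measure_itv `[s0, s0 + w].
  rewrite /= lte_fin ltrDl w0 /= in h.
  transitivity (fine ((s0 + w)%:E - s0%:E)%E); first by congr fine; exact: h.
  by rewrite -EFinB /= addrAC subrr add0r.
move=> h; apply: le_lt_trans h _.
by rewrite pmulr_llt0.
Qed.

End G.
Arguments U {R N}.
Arguments PP {R N}.

Lemma sub_sys {R : realType} N (a b a' b' : 'I_N -> R) :
  goodsys N a b -> goodsys N a' b' ->
  (forall n : nat, (n <= N)%N ->
     fourier_re (U a b) n = fourier_re (U a' b') n /\
     fourier_im (U a b) n = fourier_im (U a' b') n) ->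
  U a b `<=` U a' b'.
Proof.
move=> G G' H t Ut.
case: (pselect (U a' b' t)) => // nFt; exfalso.
have h1 := gg_neg N a b G (U a' b') t (U_meas N a' b' G') (notin_nbhd N a' b' G')
   (U_per N a' b' G') Ut nFt.
have h2 := gg_zero N a b G (U a' b') N (U_meas N a' b' G') erefl H.
by move: h1; rewrite h2 ltxx.
Qed.

Theorem corollary5p3 (R : realType) (N : nat) (E F : set R) :
  (0 < N)%N ->
  union_of_disjoint_arcs N E ->
  union_of_disjoint_arcs N F ->
  (forall n : nat, (n <= N)%N ->
     fourier_re E n = fourier_re F n /\ fourier_im E n = fourier_im F n) ->
  E = F.
Proof.
move=> _ [a [b [ga [da eE]]]] [a' [b' [ga' [da' eF]]]] H.
have eE' : E = U a b by [].
have eF' : F = U a' b' by [].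
subst E F.
have G : goodsys N a b by [].
have G' : goodsys N a' b' by [].
apply/seteqP; split.
  exact: sub_sys G G' H.
apply: sub_sys G' G _ => n hn; have [h1 h2] := H n hn; split; exact: esym.
Qed.
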